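(* Let $\mathcal{B}=(v_1,\dots,v_N)$ be a template database with $v_1,\dots,v_N$ independent and uniform in $\mathbb{Z}_2^n$, and let $\varepsilon\ge 0$. The probability that there exists an $(N,\varepsilon)$-master template, i.e. a $t\in\mathbb{Z}_2^n$ with $d_{\mathcal H}(v_i,t)\le\varepsilon$ for all $i$, is $$\mathbb{P}(\mathcal{B}\subset B_\varepsilon)=\frac{1}{2^{n(N-1)}}\sum_{B\in\mathcal{C}(\varepsilon,N)}\left|B^\cap_\varepsilon(B)\right|^{-1},$$ where for $B=(w_1,\dots,w_N)$, $B_\varepsilon^\cap(B)=\bigcap_{i=1}^N B_\varepsilon(w_i)$. Moreover $$V_\varepsilon^{N-1}\le\mathbb{P}(\mathcal{B}\subset B_\varepsilon)\le V_{2\varepsilon}^{N-1}.$$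
   Context: $d_{\mathcal H}$ is the Hamming distance on $\mathbb{Z}_2^n$ and $B_\varepsilon(t)=\{y:d_{\mathcal H}(t,y)\le\varepsilon\}$. $\mathcal{C}(\varepsilon,N)=\{B=(w_1,\dots,w_N)\in(\mathbb{Z}_2^n)^N : \{w_1,\dots,w_N\}\subset B_\varepsilon\}$ where $B_\varepsilon$ is a fixed Hamming ball of radius $\varepsilon$ (for instance centered at $0$). $V_r=\frac{1}{2^n}\sum_{k=0}^{r}\binom nk$ is the measure of a ball of radius $r$. The event ''$\mathcal{B}\subset B_\varepsilon$'' means that all templates of $\mathcal B$ lie in some common ball of radius $\varepsilon$. *)

(* Defs.v *)
From mathcomp Require Import all_boot all_order all_algebra.
Set Implicit Arguments. Unset Strict Implicit. Unset Printing Implicit Defensive.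
Import Order.TTheory GRing.Theory Num.Theory.

Definition word (n : nat) := {ffun 'I_n -> bool}.

Definition word0 (n : nat) : word n := [ffun=> false].

Definition hamming n (x y : word n) : nat := #|[set i | x i != y i]|.

Definition hball n (e : nat) (t : word n) : {set word n} :=
  [set y | hamming t y <= e].

Definition database (n N : nat) := {ffun 'I_N -> word n}.

Definition has_master n N (e : nat) (B : database n N) : bool :=
  [exists t : word n, [forall i, hamming (B i) t <= e]].

(* P(B ⊂ B_eps) for B uniform on (Z_2^n)^N (independent uniform templates) *)
Definition prob_master (R : realFieldType) (n N e : nat) : R :=
  (#|[set B : database n N | has_master e B]|)%:R / (2 ^ (n * N))%:R.

Definition Cset (n N e : nat) : {set database n N} :=
  [set B : database n N | [forall i, B i \in hball e (word0 n)]].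

Definition capball n N (e : nat) (B : database n N) : {set word n} :=
  \bigcap_(i < N) hball e (B i).

Definition Vol (R : realFieldType) (n r : nat) : R :=
  (\sum_(k < r.+1) 'C(n, k))%:R / (2 ^ n)%:R.

(* Main.v *)
Require Import Defs.
From mathcomp Require Import all_boot all_order all_algebra.
From mathcomp Require Import ring.
Import Order.TTheory GRing.Theory Num.Theory.
Set Implicit Arguments. Unset Strict Implicit. Unset Printing Implicit Defensive.
Definition addw n (t y : word n) : word n := [ffun i => t i (+) y i].

Lemma addwK n (t : word n) : involutive (addw t).
Proof. by move=> y; apply/ffunP=> i; rewrite !ffunE; case: (t i); case: (y i). Qed.

Lemma addw_inj n (t : word n) : injective (addw t).
Proof. exact: inv_inj (addwK t). Qed.

Lemma hamming_addw n (t x y : word n) : hamming (addw t x) (addw t y) = hamming x y.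
Proof. by apply: eq_card => i; rewrite !inE !ffunE; case: (t i); case: (x i); case: (y i). Qed.

Lemma hammingC n (x y : word n) : hamming x y = hamming y x.
Proof. by apply: eq_card => i; rewrite !inE eq_sym. Qed.

Lemma hamming_tri n (x y z : word n) : (hamming x z <= hamming x y + hamming y z)%N.
Proof.
rewrite /hamming; apply: leq_trans (leq_card_setU _ _).
apply: subset_leq_card; apply/subsetP => i; rewrite !inE.
by case: (x i); case: (y i); case: (z i).
Qed.

Lemma addw_self n (t : word n) : addw t t = word0 n.
Proof. by apply/ffunP=> i; rewrite !ffunE addbb. Qed.

Lemma hamming0 n (y : word n) : hamming (word0 n) y = #|[set i | y i]|.
Proof. by apply: eq_card => i; rewrite !inE ffunE; case: (y i). Qed.

Lemma card_setle n r : #|[set A : {set 'I_n} | (#|A| <= r)%N]| = (\sum_(k < r.+1) 'C(n, k))%N.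
Proof.
elim: r => [|r IH].
  rewrite big_ord_recr big_ord0 /= -[in RHS](card_ord n) -card_draws.
  by apply: eq_card => A; rewrite !inE leqn0.
rewrite big_ord_recr /= -IH -[in X in (_ + X)%N](card_ord n) -card_draws.
rewrite -(cardsID [set A : {set 'I_n} | (#|A| <= r)%N] [set A : {set 'I_n} | (#|A| <= r.+1)%N]); congr addn.
  by apply: eq_card => A; rewrite !inE; case: (leqP #|A| r) => H; rewrite ?andbT ?andbF ?leqW.
by apply: eq_card => A; rewrite !inE -ltnNge eqn_leq andbC.
Qed.

Lemma card_hball n r (t : word n) : #|hball r t| = (\sum_(k < r.+1) 'C(n, k))%N.
Proof.
have -> : hball r t = addw t @^-1: hball r (word0 n).
  by apply/setP => y; rewrite !inE -(hamming_addw t) addw_self.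
rewrite card_preimset; last exact: addw_inj.
pose f (y : word n) := [set i | y i].
pose g (A : {set 'I_n}) : word n := [ffun i => i \in A].
have gK : cancel g f by move=> A; apply/setP => i; rewrite !inE ffunE.
have fK : cancel f g by move=> y; apply/ffunP => i; rewrite ffunE inE.
rewrite -card_setle -(card_imset _ (can_inj gK)); apply: eq_card => y.
rewrite !inE hamming0; apply/idP/imsetP.
  by move=> H; exists (f y); rewrite ?inE // fK.
by case=> A; rewrite inE => HA ->; move: HA; rewrite -{1}(gK A).
Qed.
Lemma foldr_prod (s : seq nat) : foldr muln 1%N s = (\prod_(x <- s) x)%N.
Proof. elim: s => [|a s IH]; first by rewrite big_nil. by rewrite big_cons -IH. Qed.

Lemma card_Ar n N r :
  #|[set B : database n N.+1 | [forall i, hamming (B ord0) (B i) <= r]]| =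
  (2 ^ n * (\sum_(k < r.+1) 'C(n, k)) ^ N)%N.
Proof.
rewrite -sum1_card (partition_big (fun B : database n N.+1 => B ord0) predT) //=.
have inner : forall t : word n,
  (\sum_(B in [set B : database n N.+1 | [forall i, hamming (B ord0) (B i) <= r]] | B ord0 == t) 1 =
   (\sum_(k < r.+1) 'C(n, k)) ^ N)%N.
  move=> t.
  pose F := fun i : 'I_N.+1 => if i == ord0 then [pred y : word n | y == t]
                                else [pred y : word n | hamming t y <= r].
  rewrite sum1dep_card.
  have -> : #|[set B : database n N.+1 | (B \in [set B : database n N.+1 | [forall i, hamming (B ord0) (B i) <= r]]) && (B ord0 == t)]|
        = #|(family F : simpl_pred _)|.
    apply: eq_card => B; rewrite !inE; apply/andP/familyP.
      case=> /forallP H /eqP E i; rewrite /F.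
      case: (i =P ord0) => [->|_]; rewrite inE /=; first by rewrite E.
      by rewrite -E.
    move=> H; have E : B ord0 == t by have := H ord0; rewrite /F eqxx inE.
    split=> //; apply/forallP => i; move: (H i); rewrite /F (eqP E).
    case: (i =P ord0) => [->|_]; rewrite inE //= => /eqP ->.
    rewrite /hamming (_ : [set _ | _] = set0) ?cards0 //.
    by apply/setP => j; rewrite !inE eqxx.
  rewrite card_family foldr_prod big_map big_enum /= big_ord_recl /F eqxx /=.
  rewrite (_ : #|[pred y | y == t]| = 1%N); last by rewrite -(card1 t); apply: eq_card => y; rewrite !inE.
  rewrite mul1n (eq_bigr (fun _ => \sum_(k < r.+1) 'C(n, k))%N).
    by rewrite prod_nat_const card_ord.
  move=> i _; rewrite -(card_hball r t); apply: eq_card => y; rewrite !inE.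
  by [].
by rewrite (eq_bigr _ (fun t _ => inner t)) sum_nat_const cardT -cardE card_ffun card_bool card_ord.
Qed.

Definition shift n N (t : word n) (B : database n N) : database n N :=
  [ffun i => addw t (B i)].

Lemma shift_inj n N (t : word n) : injective (@shift n N t).
Proof.
apply: (inv_inj (_ : involutive _)) => B; apply/ffunP => i.
by rewrite !ffunE addwK.
Qed.

Lemma mem_capball n N e (B : database n N) y :
  (y \in capball e B) = [forall i, hamming (B i) y <= e].
Proof.
apply/bigcapP/forallP => H i; first by have := H i isT; rewrite inE.
by move=> _; rewrite inE.
Qed.

Lemma addw0 n (t : word n) : addw t (word0 n) = t.
Proof. by apply/ffunP => i; rewrite !ffunE addbF. Qed.

Lemma capball_shift n N e (t : word n) (B : database n N) :
  #|capball e (shift t B)| = #|capball e B|.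
Proof.
rewrite -(card_preimset _ (@addw_inj n t)); apply: eq_card => y.
rewrite inE !mem_capball; apply: eq_forallb => i.
by rewrite ffunE hamming_addw.
Qed.

Lemma mem_capball_shift n N e (t : word n) (B : database n N) :
  (t \in capball e (shift t B)) = (B \in Cset n N e).
Proof.
rewrite mem_capball inE; apply: eq_forallb => i.
rewrite ffunE inE (_ : hamming (addw t (B i)) t = hamming (addw t (B i)) (addw t (word0 n))); last by rewrite addw0.
by rewrite hamming_addw hammingC.
Qed.

Lemma master_cap n N e (B : database n N) :
  has_master e B = (capball e B != set0).
Proof.
apply/existsP/set0Pn.
  by case=> t Ht; exists t; rewrite mem_capball.
by case=> t Ht; exists t; rewrite -mem_capball.
Qed.

Local Open Scope ring_scope.

Lemma count_master (R : realFieldType) n N e :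
  (#|[set B : database n N | has_master e B]|)%:R =
  (2 ^ n)%:R * \sum_(B in Cset n N e) ((#|capball e B|)%:R : R)^-1.
Proof.
have step1 : (#|[set B : database n N | has_master e B]|)%:R =
   \sum_(B : database n N) \sum_(t : word n)
      (if t \in capball e B then ((#|capball e B|)%:R : R)^-1 else 0).
  rewrite -sum1_card natr_sum big_mkcond /=; apply: eq_bigr => B _.
  rewrite -big_mkcond /= sumr_const inE master_cap -cards_eq0.
  case: eqP => [->|/eqP H]; first by rewrite mulr0n.
  by rewrite /= -[RHS]mulr_natr mulVf // pnatr_eq0.
rewrite step1 exchange_big /=.
rewrite (eq_bigr (fun _ => \sum_(B in Cset n N e) ((#|capball e B|)%:R : R)^-1)).
  by rewrite sumr_const card_ffun card_bool card_ord mulr_natl.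
move=> t _; rewrite (reindex_inj (@shift_inj n N t)) /= [RHS]big_mkcond /=.
by apply: eq_bigr => B _; rewrite mem_capball_shift capball_shift.
Qed.

Lemma Vol_Ar (R : realFieldType) n N r :
  Vol R n r ^+ N = (#|[set B : database n N.+1 | [forall i, hamming (B ord0) (B i) <= r]%N]|)%:R
                   / (2 ^ (n * N.+1))%:R.
Proof.
rewrite card_Ar /Vol mulnS expnD !natrM !natrX expr_div_n.
rewrite -exprM.
have h1 : 2 ^+ n != 0 :> R by rewrite expf_neq0 // pnatr_eq0.
have h2 : 2 ^+ (n * N) != 0 :> R by rewrite expf_neq0 // pnatr_eq0.
by field; rewrite h1 h2.
Qed.

Theorem theorem9p2 (R : realFieldType) (n N e : nat) (hN : (0 < N)%N) :
  prob_master R n N e =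
    ((2 ^ (n * (N - 1)))%:R)^-1 *
      \sum_(B in Cset n N e) ((#|capball e B|)%:R)^-1
  /\ Vol R n e ^+ (N - 1) <= prob_master R n N e
  /\ prob_master R n N e <= Vol R n (2 * e) ^+ (N - 1).
Proof.
case: N hN => // N _; rewrite subn1 /=.
have hpos : 0 < ((2 ^ (n * N.+1))%:R : R)^-1 by rewrite invr_gt0 ltr0n expn_gt0.
split; last split.
- rewrite /prob_master count_master mulnS expnD natrM.
  have h1 : (2 ^ n)%:R != 0 :> R by rewrite pnatr_eq0 expn_eq0.
  have h2 : (2 ^ (n * N))%:R != 0 :> R by rewrite pnatr_eq0 expn_eq0.
  by field; rewrite h1 h2.
  rewrite Vol_Ar /prob_master ler_pM2r // ler_nat.
  apply: subset_leq_card; apply/subsetP => B; rewrite !inE => /forallP H.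
  by apply/existsP; exists (B ord0); apply/forallP => i; rewrite hammingC.
  rewrite Vol_Ar /prob_master (ler_pM2r hpos) ler_nat.
  apply: subset_leq_card; apply/subsetP => B; rewrite !inE => /existsP [t /forallP H].
  apply/forallP => i; apply: leq_trans (hamming_tri _ t _) _.
  by rewrite mul2n -addnn leq_add // hammingC.
Qed.
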